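(* Let $D$ be a directed graph whose minimum feedback vertex set has cardinality exactly one. Then for an integer $q\ge 2$, $D$ is $q$-solvable if and only if $q=2$.
   Context: A directed graph $D=(V,E)$ has arcs $E \subseteq \{(u,v)\in V^2 : u \neq v\}$ (bidirectional pairs allowed, forming directed cycles of length 2). A feedback vertex set is a set $S\subseteq V$ such that $D-S$ contains no directed cycle. $N^-(v)=\{u:(u,v)\in E\}$. For $q\ge2$ let $[q]=\{0,\dots,q-1\}$. A $D$-function over $[q]$ is a map $f=(f_v)_{v\in V}:[q]^V\to[q]^V$ with each $f_v(x)$ depending only on $(x_u)_{u\in N^-(v)}$. $D$ is $q$-solvable if some $D$-function $f$ over $[q]$ has the property that for every $x\in[q]^V$ there is $v$ with $f_v(x)=x_v$. *)

(* Defs.v *)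
From mathcomp Require Import all_boot.
Set Implicit Arguments. Unset Strict Implicit. Unset Printing Implicit Defensive.

(* A directed graph D = (V, E): finite vertex type V, arc relation E : rel V,
   (u,v) is an arc iff E u v.  Loops are excluded by the hypothesis
   [irreflexive E]; bidirectional pairs are allowed. *)

Definition dcycle_avoiding (V : finType) (E : rel V) (S : {set V}) (s : seq V) :=
  [/\ s != [::], uniq s, cycle E s & all (fun v => v \notin S) s].

Definition feedback_vertex_set (V : finType) (E : rel V) (S : {set V}) : Prop :=
  forall s : seq V, ~ dcycle_avoiding E S s.

Definition min_fvs_card (V : finType) (E : rel V) (k : nat) : Prop :=
  (exists S : {set V}, feedback_vertex_set E S /\ #|S| = k) /\
  (forall S : {set V}, feedback_vertex_set E S -> k <= #|S|).

Definition D_function (V : finType) (E : rel V) (q : nat)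
    (f : {ffun V -> 'I_q} -> {ffun V -> 'I_q}) : Prop :=
  forall (v : V) (x y : {ffun V -> 'I_q}),
    (forall u, E u v -> x u = y u) -> f x v = f y v.

Definition q_solvable (V : finType) (E : rel V) (q : nat) : Prop :=
  exists f : {ffun V -> 'I_q} -> {ffun V -> 'I_q},
    D_function E f /\ forall x : {ffun V -> 'I_q}, exists v : V, f x v = x v.

(* Main.v *)
Require Import Defs.
From mathcomp Require Import all_boot.
From Stdlib Require Import Classical.

Lemma cycle_in_set (V : finType) (E : rel V) (S U : {set V}) (v0 : V) :
  v0 \in U -> (forall v, v \in U -> v \notin S) ->
  (forall v, v \in U -> exists2 u, u \in U & E u v) ->
  exists s, dcycle_avoiding E S s.
Proof.
move=> v0U US Hin.
pose g v := if [pick u in U | E u v] is Some u then u else v.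
have gU v : v \in U -> g v \in U /\ E (g v) v.
  move=> vU; rewrite /g; case: pickP => [u /andP[-> ->] //|].
  by case: (Hin v vU) => u uU Euv /(_ u); rewrite uU Euv.
have iterU n y : y \in U -> iter n g y \in U.
  by move=> yU; elim: n => //= n IH; case: (gU _ IH).
pose h (i : 'I_#|V|.+1) := iter i g v0.
have : ~~ injectiveb h.
  apply/negP => /injectiveP inj; have := leq_card _ inj.
  by rewrite card_ord ltnn.
case/injectivePn => i [j] neij hij.
have [k [x [xU Hk]]] : exists k x, x \in U /\ iter k.+1 g x = x.
  rewrite /h in hij.
  case: (ltngtP i j) => [lt|lt|eq]; last by rewrite (val_inj eq) eqxx in neij.
  - exists (j - i).-1, (iter i g v0); split; first exact: iterU.
    by rewrite prednK ?subn_gt0 // -iterD subnK ?(ltnW lt).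
  - exists (i - j).-1, (iter j g v0); split; first exact: iterU.
    by rewrite prednK ?subn_gt0 // -iterD subnK ?(ltnW lt).
have fc : fcycle g (orbit g x) by apply/(@orbitPcycle _ g x 3 0); exists k.
have allU : all (fun y => y \in U) (orbit g x).
  by apply/allP => y /trajectP [n _ ->]; apply: iterU.
exists (rev (orbit g x)); split.
- by apply/eqP => e; have := in_orbit g x; rewrite -mem_rev e.
- by rewrite rev_uniq orbit_uniq.
- rewrite rev_cycle; apply: (sub_in_cycle (P := fun y => y \in U)) fc => //.
  by move=> a b aU bU /eqP <-; case: (gU a aU).
- by apply/allP => y; rewrite mem_rev => /(allP allU) /US.
Qed.

Lemma source_exists (V : finType) (E : rel V) (S U : {set V}) :
  feedback_vertex_set E S -> U != set0 -> (forall v, v \in U -> v \notin S) ->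
  exists2 v, v \in U & forall u, E u v -> u \notin U.
Proof.
move=> fvs /set0Pn [v0 v0U] US.
case: (boolP [exists v in U, [forall u, E u v ==> (u \notin U)]]).
  case/exists_inP => v vU /forallP H; exists v => // u Euv.
  by have := H u; rewrite Euv.
rewrite negb_exists_in => /forall_inP H.
have Hin : forall v, v \in U -> exists2 u, u \in U & E u v.
  move=> v vU; have := H v vU; rewrite negb_forall => /existsP [u].
  by rewrite negb_imply negbK => /andP [Euv uU]; exists u.
by case: (@cycle_in_set V E S U v0 v0U US Hin) => s /fvs.
Qed.

Section Pick3.
Variable q : nat.
Hypothesis hq : 2 < q.
Definition z0 : 'I_q := Ordinal (leq_trans (isT : 0 < 3) hq).
Definition z1 : 'I_q := Ordinal (leq_trans (isT : 1 < 3) hq).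
Definition z2 : 'I_q := Ordinal hq.
Definition pick3 (a b : 'I_q) : 'I_q :=
  if (z0 != a) && (z0 != b) then z0 else if (z1 != a) && (z1 != b) then z1 else z2.
Lemma pick3P a b : pick3 a b != a /\ pick3 a b != b.
Proof.
rewrite /pick3; case: ifP => [/andP[] //|H0]; case: ifP => [/andP[] //|H1].
move: H0 H1; rewrite /z0 /z1 /z2.
case: a b => [a Ha] [b Hb]; rewrite /eq_op /= => H0 H1.
by move: H0 H1; case: a Ha => [|[|[|a]]] ? ; case: b Hb => [|[|[|b]]] ?.
Qed.
End Pick3.
Arguments z0 {q}. Arguments z1 {q}. Arguments z2 {q}. Arguments pick3 {q}. Arguments pick3P {q}.

Section Build.
Variables (V : finType) (E : rel V) (w : V) (q : nat).
Hypothesis hq : 2 < q.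
Variable f : {ffun V -> 'I_q} -> {ffun V -> 'I_q}.
Hypothesis fD : D_function E f.
Hypothesis fvs : feedback_vertex_set E [set w].

Definition upd (y : {ffun V -> 'I_q}) (c : 'I_q) : {ffun V -> 'I_q} :=
  [ffun u => if u == w then c else y u].
Definition good (y : {ffun V -> 'I_q}) (v : V) := y v != f (upd y (z0 hq)) v /\ y v != f (upd y (z1 hq)) v.

Lemma build n : forall U : {set V}, #|U| = n -> w \notin U ->
  (exists y, forall v, v != w -> v \notin U -> good y v) ->
  (forall v u, v != w -> v \notin U -> E u v -> u != w -> u \notin U) ->
  exists y, forall v, v != w -> good y v.
Proof.
elim: n => [|n IH] U cU wU [y Hy] Hcl.
  move/eqP: cU; rewrite cards_eq0 => /eqP U0.
  by exists y => v vw; apply: Hy => //; rewrite U0 inE.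
have U0 : U != set0 by apply/set0Pn/card_gt0P; rewrite cU.
have US : forall v, v \in U -> v \notin [set w].
  by move=> v vU; rewrite inE; apply/eqP => e; rewrite -e vU in wU.
case: (@source_exists V E [set w] U fvs U0 US) => v vU vsrc.
have vw : v != w by apply/eqP => e; rewrite -e vU in wU.
pose y' := [ffun u => if u == v then pick3 hq (f (upd y (z0 hq)) v) (f (upd y (z1 hq)) v) else y u].
have same : forall v' c, (forall u, E u v' -> u != w -> u != v) ->
    f (upd y' c) v' = f (upd y c) v'.
  move=> v' c Hv'; apply: fD => u Euv; rewrite !ffunE.
  case: eqP => // /eqP uw.
  by have := Hv' u Euv uw; case: eqP.
have srcv : forall u, E u v -> u != w -> u != v.
  by move=> u Euv _; apply/eqP => e; have := vsrc u Euv; rewrite e vU.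
apply: (IH (U :\ v)).
- by move: cU; rewrite (cardsD1 v U) vU add1n => [[]].
- by rewrite inE negb_and wU orbT.
- exists y' => v' v'w; rewrite !inE negb_and negbK => /orP [/eqP ->|v'U].
    rewrite /good !same // /y' ffunE eqxx.
    by case: (pick3P hq (f (upd y (z0 hq)) v) (f (upd y (z1 hq)) v)).
  have v'v : v' != v by apply/eqP => e; rewrite e vU in v'U.
  have srcv' : forall u, E u v' -> u != w -> u != v.
    by move=> u Euv uw; apply/eqP => e; have := Hcl v' u v'w v'U Euv uw; rewrite e vU.
  rewrite /good !same // /y' ffunE (negbTE v'v).
  exact: Hy.
- move=> v' u v'w; rewrite !inE negb_and negbK => /orP [/eqP ->|v'U] Euv uw.
    by rewrite negb_and vsrc // orbT.
  by rewrite negb_and (Hcl v' u v'w v'U Euv uw) orbT.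
Qed.
End Build.

Definition tog (i : 'I_2) : 'I_2 := if i == ord0 then ord_max else ord0.
Lemma togP (a b : 'I_2) : a != tog b -> a = b.
Proof.
rewrite /tog; case: a b => [[|[|a]] Ha] [[|[|b]] Hb] //= _; apply: val_inj => //.
Qed.
Lemma tog_neq (a : 'I_2) : a != a -> False.
Proof. by rewrite eqxx. Qed.

Lemma two_solvable (V : finType) (E : rel V) (s0 : V) (t : seq V) :
  uniq (s0 :: t) -> cycle E (s0 :: t) -> q_solvable E 2.
Proof.
set s := s0 :: t => us cs.
exists (fun x => [ffun v => if v == s0 then x (prev s v)
   else if v \in s then tog (x (prev s v)) else ord0]); split.
  move=> v x y H; rewrite !ffunE.
  case: ifP => [/eqP e|_]; first by rewrite H // prev_cycle // e mem_head.
  by case: ifP => // vs; rewrite H // prev_cycle.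
move=> x; apply: NNPP => Hn.
have H : forall v, ([ffun v => if v == s0 then x (prev s v)
   else if v \in s then tog (x (prev s v)) else ord0] : {ffun V -> 'I_2}) v != x v.
  by move=> v; apply/eqP => e; apply: Hn; exists v.
have Hi : forall i, i <= size t -> x (nth s0 s i) = x s0.
  elim=> [|i IH] // lti.
  have ins : nth s0 s i.+1 \in s by rewrite mem_nth.
  have ne : nth s0 s i.+1 != s0.
    apply/eqP => e; move: us; rewrite /s /= => /andP [s0t _].
    by move: s0t; rewrite -e /= mem_nth.
  have pv : prev s (nth s0 s i.+1) = nth s0 s i.
    rewrite prev_nth ins /s /= index_uniq //.
    by move: us => /andP [].
  have := H (nth s0 s i.+1); rewrite ffunE (negbTE ne) ins pv.
  rewrite eq_sym => /togP ->; apply: IH; exact: ltnW.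
have := H s0; rewrite ffunE eqxx.
have -> : prev s s0 = nth s0 s (size t).
  rewrite prev_nth mem_head /s /= memNindex //.
  by move: us => /andP [].
by rewrite Hi // eqxx.
Qed.

Theorem corollary12 (V : finType) (E : rel V) (hirr : irreflexive E)
  (hfvs : min_fvs_card E 1) (q : nat) (hq : 2 <= q) :
  q_solvable E q <-> q = 2.
Proof.
case: hfvs => [[S [fvsS cS]] minS].
move/eqP: cS => /cards1P [w Sw]; subst S.
split.
- move=> [f [fD Hf]]; apply/eqP; rewrite eqn_leq hq andbT leqNgt; apply/negP => hq3.
  have [y Hy] : exists y, forall v, v != w -> @good V w q hq3 f y v.
    apply: (@build V E w q hq3 f fD fvsS _ [set v | v != w] erefl).
    + by rewrite inE eqxx.
    + by exists [ffun _ => z0 hq3] => v vw /negP []; rewrite inE.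
    + by move=> v u vw /negP []; rewrite inE.
  have same : f (@upd V w q y (z0 hq3)) w = f (@upd V w q y (z1 hq3)) w.
    apply: fD => u Euw; rewrite !ffunE.
    have -> : (u == w) = false by apply/eqP => e; move: Euw; rewrite e hirr.
    by [].
  have hfix : forall c, (c = z0 hq3) \/ (c = z1 hq3) -> f (@upd V w q y c) w = c.
    move=> c hc; case: (Hf (@upd V w q y c)) => v; case: (eqVneq v w) => [->|vw].
      by rewrite ffunE eqxx.
    rewrite ffunE (negbTE vw) => e; exfalso.
    case: (Hy v vw) => H0 H1.
    by case: hc => hc; subst c; [move: H0|move: H1]; rewrite e eqxx.
  have := same; rewrite !hfix; [|by right|by left].
  by move/(congr1 val).
- move=> ->.
  have nf : ~ feedback_vertex_set E set0.
    by move=> /minS; rewrite cards0.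
  have [s [ne us cs _]] : exists s, dcycle_avoiding E set0 s.
    by apply: NNPP => H; apply: nf => s Hs; apply: H; exists s.
  case: s ne us cs => [//|s0 t] _ us cs.
  exact: two_solvable us cs.
Qed.
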